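(* For all integers $n\geq 3$ and $k\geq 2$, the digraph $M(n,k)$ is highly arc-transitive, has in-degree and out-degree equal to $n-1$ at every vertex, and does not have property $Z$.
   Context: Construction of $M(n,k)$: let $F=\langle a_1\rangle*\cdots*\langle a_n\rangle$ be the free product of $n$ cyclic groups of order $k$. Form the digraph $T^*$ with vertex set $F\times\{1,\dots,n\}$, arcs in both directions between $(v,i)$ and $(v,j)$ for all $v\in F$, $i\neq j$, and ''cycle arcs'' $(v,i)\to(va_i,i)$. Form $T^*\otimes\vec K_2$ with vertex set $VT^*\times\{-,+\}$ and an arc $(x,-)\to(y,+)$ whenever $x\to y$ in $T^*$. $M(n,k)$ is obtained by identifying $((v,i),-)$ with $((va_i,i),+)$ for all $v,i$ (contracting the arcs coming from cycle arcs), keeping the remaining arcs $((v,i),-)\to((v,j),+)$, $i\ne j$. A $k$-arc is a sequence $(x_0,\dots,x_k)$ of vertices with $x_i\to x_{i+1}$; a digraph is highly arc-transitive if its automorphism group is transitive on $k$-arcs for every $k$. A digraph has property $Z$ if there is a digraph homomorphism from it onto the two-way infinite directed line (vertex set $\mathbb{Z}$, arcs $i\to i+1$). *)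

(* Defs.v *)
From mathcomp Require Import all_boot all_order all_algebra.
Set Implicit Arguments. Unset Strict Implicit. Unset Printing Implicit Defensive.

(* Elements of F are represented by their (unique) reduced normal form:
   a word [:: (i1,e1); ...; (im,em)] standing for a_{i1}^{e1} ... a_{im}^{em},
   with 0 < e_t < k and consecutive indices distinct. *)
Definition reducedb (n k : nat) (w : seq ('I_n * nat)) : bool :=
  all (fun p => (0 < p.2) && (p.2 < k)) w &&
  sorted (fun a b : 'I_n => a != b) (map fst w).

Definition FP (n k : nat) := {w : seq ('I_n * nat) | reducedb k w}.

Definition gen_mul_seq (n k : nat) (i : 'I_n) (w : seq ('I_n * nat))
  : seq ('I_n * nat) :=
  match rev w with
  | (j, e) :: r =>
      if j == i then
        (if e.+1 == k then rev r else rcons (rev r) (j, e.+1))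
      else rcons w (i, 1)
  | [::] => [:: (i, 1)]
  end.

(* v |-> v a_i on F (the default branch of insubd is never used when k >= 2) *)
Definition gen_mul (n k : nat) (i : 'I_n) (v : FP n k) : FP n k :=
  insubd v (gen_mul_seq k i (val v)).

Definition Tstar_arc (n k : nat) (x y : FP n k * 'I_n) : Prop :=
  (x.1 = y.1 /\ x.2 <> y.2)
  \/ (y = (gen_mul x.2 x.1, x.2)).

Definition is_cycle_arc (n k : nat) (x y : FP n k * 'I_n) : Prop :=
  y = (gen_mul x.2 x.1, x.2).

(* ---------- T* (x) K_2 : vertices VT* x {-,+}; false = -, true = + ---------- *)
Definition tensor_arc (n k : nat) (a b : (FP n k * 'I_n) * bool) : Prop :=
  a.2 = false /\ b.2 = true /\ Tstar_arc a.1 b.1.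

(* After identifying ((v,i),-) with ((v a_i, i),+), every identification class
   contains exactly one '-' vertex; we use ((v,i),-), i.e. the pair (v,i), as the
   name of the class.  Class membership: *)
Definition Mclass (n k : nat) (x : FP n k * 'I_n) (a : (FP n k * 'I_n) * bool)
  : Prop :=
  a = (x, false) \/ a = ((gen_mul x.2 x.1, x.2), true).

(* Arcs of M(n,k): images of arcs of T* (x) K_2 which do not come from cycle arcs
   (those are contracted). *)
Definition Marc (n k : nat) (x y : FP n k * 'I_n) : Prop :=
  exists a b, Mclass x a /\ Mclass y b /\ tensor_arc a b /\
              ~ is_cycle_arc a.1 b.1.

Definition is_automorphism (V : Type) (E : V -> V -> Prop) (g : V -> V) : Prop :=
  bijective g /\ forall x y, E x y <-> E (g x) (g y).

(* an s-arc (x_0,...,x_s), encoded by x : nat -> V (values beyond s irrelevant) *)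
Definition is_sarc (V : Type) (E : V -> V -> Prop) (s : nat) (x : nat -> V) : Prop :=
  forall t, t < s -> E (x t) (x t.+1).

Definition highly_arc_transitive (V : Type) (E : V -> V -> Prop) : Prop :=
  forall (s : nat) (x y : nat -> V), is_sarc E s x -> is_sarc E s y ->
    exists g, is_automorphism E g /\ forall t, t <= s -> g (x t) = y t.

Definition out_degree_is (V : eqType) (E : V -> V -> Prop) (x : V) (d : nat) : Prop :=
  exists s : seq V, uniq s /\ size s = d /\ forall y, E x y <-> y \in s.

Definition in_degree_is (V : eqType) (E : V -> V -> Prop) (x : V) (d : nat) : Prop :=
  exists s : seq V, uniq s /\ size s = d /\ forall y, E y x <-> y \in s.

Definition property_Z (V : Type) (E : V -> V -> Prop) : Prop :=
  exists phi : V -> int,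
    (forall x y, E x y -> phi y = (phi x + 1)%R) /\
    (forall z : int, exists x, phi x = z).

(* Main.v *)
Require Import Defs.
From mathcomp Require Import all_boot all_order all_algebra all_fingroup.
From mathcomp Require Import zify.
Set Implicit Arguments. Unset Strict Implicit. Unset Printing Implicit Defensive.

Lemma sorted_rcons2 (T : Type) (R : rel T) m a b :
  sorted R (rcons (rcons m a) b) = sorted R (rcons m a) && R a b.
Proof. case: m => [|c m] /=; first by rewrite andbT. by rewrite rcons_path last_rcons. Qed.

Section Words.
Variables (n k : nat).
Hypothesis Hk : 1 < k.

Local Notation W := (seq ('I_n * nat)).
Local Notation gms := (@gen_mul_seq n k).
Local Notation V := (FP n k).

Definition lastl (w : W) : option 'I_n := last None [seq Some p.1 | p <- w].
Definition hdl (w : W) : option 'I_n := ohead [seq p.1 | p <- w].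

Lemma gms_nil j : gms j [::] = [:: (j,1)].
Proof. by []. Qed.

Lemma gms_rcons j r l e : gms j (rcons r (l,e)) =
  if l == j then (if e.+1 == k then r else rcons r (l,e.+1)) else rcons (rcons r (l,e)) (j,1).
Proof. by rewrite /gen_mul_seq rev_rcons revK. Qed.

Lemma lastl_rcons r l e : lastl (rcons r (l,e)) = Some l.
Proof. by rewrite /lastl map_rcons last_rcons. Qed.

Lemma red_rcons r l e : reducedb k (rcons r (l,e)) =
  [&& reducedb k r, (0 < e < k) & lastl r != Some l].
Proof.
rewrite /reducedb all_rcons map_rcons.
case/lastP: r => [|r [l' e']] /=; first by rewrite andbT.
rewrite map_rcons sorted_rcons2 lastl_rcons.
case: (all _ _) => //=; case: (0 < e < k) => //=; by rewrite andbC.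
Qed.

Lemma red_nil : reducedb k ([::] : W). Proof. by []. Qed.

Lemma red_gms j w : reducedb k w -> reducedb k (gms j w).
Proof.
case/lastP: w => [|r [l e]]; first by rewrite gms_nil /reducedb /= Hk.
rewrite gms_rcons red_rcons => /and3P [Hr /andP [He0 Hek] Hl].
case: eqP => [_|/eqP Hlj].
  case: eqP => // /eqP Hne; rewrite red_rcons Hr Hl /= andbT.
  by rewrite ltn_neqAle Hne Hek.
by rewrite red_rcons lastl_rcons red_rcons Hr He0 Hek Hl /= Hk; apply/eqP => -[E]; rewrite E eqxx in Hlj.
Qed.

Lemma iter_gms_fresh j w t : lastl w != Some j -> 0 < t < k ->
  iter t (gms j) w = rcons w (j,t).
Proof.
move=> Hl; elim: t => // t IH /andP [_ Htk].
case: t IH Htk => [|t] IH Htk.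
  case/lastP: w Hl {IH} => [|r [l e]] Hl //=.
  by rewrite gms_rcons; case: (eqVneq l j) Hl => [->|] //; rewrite lastl_rcons eqxx.
rewrite iterS IH ?(ltnW Htk) // gms_rcons eqxx.
by rewrite (ltn_eqF Htk).
Qed.

Lemma gms_last j w : gms j (rcons w (j, k.-1)) = w.
Proof. by rewrite gms_rcons eqxx prednK ?eqxx // ltnW. Qed.

Lemma iter_gms_k j w : reducedb k w -> iter k (gms j) w = w.
Proof.
have fresh : forall w, lastl w != Some j -> iter k (gms j) w = w.
  move=> w' Hl.
  have -> : iter k (gms j) w' = gms j (iter k.-1 (gms j) w') by rewrite -iterS prednK // ltnW.
  have Hk1 : 0 < k.-1 < k.
    by case: (k) Hk => [|[|kk]] // _; rewrite /= ltnS leqnn.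
  by rewrite iter_gms_fresh // gms_last.
case/lastP: w => [|r [l e]]; first by move=> _; apply: fresh.
case: (eqVneq l j) => [->|Hlj]; last by move=> _; apply: fresh; rewrite lastl_rcons; apply/eqP => -[]; apply/eqP.
rewrite red_rcons => /and3P [_ He Hl].
by rewrite -iter_gms_fresh // -iterD addnC iterD fresh.
Qed.

End Words.


Section FPlevel.
Variables (n k : nat).
Hypothesis Hk : 1 < k.
Local Notation W := (seq ('I_n * nat)).
Local Notation V := (FP n k).
Local Notation gms := (@gen_mul_seq n k).
Local Notation gm := (@gen_mul n k).

Definition e0 : V := exist _ [::] (@red_nil n k).

Lemma val_gm j (v : V) : val (gm j v) = gms j (val v).
Proof. exact: (insubdK _ (red_gms Hk j (valP v))). Qed.

Lemma val_iter_gm t j (v : V) : val (iter t (gm j) v) = iter t (gms j) (val v).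
Proof. by elim: t => // t IH; rewrite iterS val_gm IH. Qed.

Lemma iter_gm_k j (v : V) : iter k (gm j) v = v.
Proof. by apply: val_inj; rewrite val_iter_gm (iter_gms_k Hk) ?(valP v). Qed.

Lemma iter_gm_mulk t j (v : V) : iter (t * k) (gm j) v = v.
Proof. by elim: t => // t IH; rewrite mulSn iterD IH iter_gm_k. Qed.

Definition ginv j (v : V) := iter k.-1 (gm j) v.

Lemma gm_ginv j v : gm j (ginv j v) = v.
Proof. by rewrite /ginv -iterS prednK ?iter_gm_k // ltnW. Qed.

Lemma ginv_gm j v : ginv j (gm j v) = v.
Proof. by rewrite /ginv -iterSr prednK ?iter_gm_k // ltnW. Qed.

Lemma gm_inj j : injective (gm j).
Proof. exact: can_inj (ginv_gm j). Qed.

Lemma Marc_iff (x y : V * 'I_n) : Marc x y <-> x.1 = gm y.2 y.1 /\ x.2 <> y.2.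
Proof.
split.
  case=> [a [b [Ha [Hb [[Ha2 [Hb2 Ht]] Hnc]]]]].
  case: Ha => Ha; last by rewrite Ha in Ha2.
  case: Hb => Hb; first by rewrite Hb in Hb2.
  subst a b; case: Ht => //=.
move=> [H1 H2]; exists (x, false), ((gm y.2 y.1, y.2), true).
split; first by left.
split; first by right.
split; first by split=> //; split=> //; left.
by move=> /= [_ E]; apply: H2.
Qed.

Definition step (acc : V) (p : 'I_n * nat) := iter p.2 (gm p.1) acc.
Definition Fold (g : V) (s : W) := foldl step g s.
Definition lmul (g v : V) := Fold g (val v).

Lemma Fold_rcons g s p : Fold g (rcons s p) = step (Fold g s) p.
Proof. by rewrite /Fold foldl_rcons. Qed.

Lemma Fold_gms g j s : Fold g (gms j s) = gm j (Fold g s).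
Proof.
case/lastP: s => [|r [l e]]; first by [].
rewrite gms_rcons; case: eqVneq => [->|Hlj].
  case: eqP => [Hek|_].
    by rewrite Fold_rcons /step /= -iterS Hek iter_gm_k.
  by rewrite !Fold_rcons.
by rewrite Fold_rcons.
Qed.

Lemma lmul_gm g j v : lmul g (gm j v) = gm j (lmul g v).
Proof. by rewrite /lmul val_gm Fold_gms. Qed.

Lemma lmul_iter g t j v : lmul g (iter t (gm j) v) = iter t (gm j) (lmul g v).
Proof. by elim: t => // t IH; rewrite iterS lmul_gm IH. Qed.

Lemma Fold_e s : reducedb k s -> val (Fold e0 s) = s.
Proof.
elim/last_ind: s => [//|r [l e] IH].
rewrite red_rcons => /and3P [Hr He Hl].
by rewrite Fold_rcons /step /= val_iter_gm IH // iter_gms_fresh.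
Qed.

Lemma lmul_e v : lmul e0 v = v.
Proof. by apply: val_inj; rewrite /lmul Fold_e ?(valP v). Qed.

Lemma lmul_ge g : lmul g e0 = g.
Proof. by []. Qed.

Lemma lmul_assoc h g v : lmul h (lmul g v) = lmul (lmul h g) v.
Proof.
rewrite /lmul; elim/last_ind: (val v) => [//|s p IH].
by rewrite !Fold_rcons /step -IH -/(lmul h _) lmul_iter.
Qed.

Lemma Fold_surj s x : exists h, Fold h s = x.
Proof.
elim/last_ind: s x => [|s [l t] IH] x; first by exists x.
have [h Hh] := IH (iter (t * k.-1) (gm l) x).
exists h; rewrite Fold_rcons Hh /step /= -iterD.
have -> : t + t * k.-1 = t * k by rewrite -[in RHS](prednK (ltnW Hk)) mulnS.
by rewrite iter_gm_mulk.
Qed.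

Lemma linv g : exists h, lmul h g = e0.
Proof. exact: Fold_surj. Qed.

End FPlevel.


Lemma auto_of (T : Type) (E : T -> T -> Prop) f f' :
  (forall x y, E x y -> E (f x) (f y)) -> (forall x y, E x y -> E (f' x) (f' y)) ->
  cancel f f' -> cancel f' f -> is_automorphism E f.
Proof.
move=> Hf Hf' c1 c2; split; first by exists f'.
by move=> x y; split; [apply: Hf | move=> /Hf'; rewrite !c1].
Qed.

Lemma auto_comp (T : Type) (E : T -> T -> Prop) f g :
  is_automorphism E f -> is_automorphism E g -> is_automorphism E (f \o g).
Proof.
move=> [bf Hf] [bg Hg]; split; first exact: bij_comp.
by move=> x y /=; split => H; [exact/(Hf (g x) (g y))/(Hg x y) | exact/(Hg x y)/(Hf (g x) (g y))].
Qed.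

Lemma auto_inv (T : Type) (E : T -> T -> Prop) f :
  is_automorphism E f -> exists f', [/\ is_automorphism E f', cancel f f' & cancel f' f].
Proof.
move=> [[f' c1 c2] Hf]; exists f'; split => //; split; first by exists f.
by move=> x y; split => H; [apply/Hf; rewrite !c2 | move/Hf: H; rewrite !c2].
Qed.

Section Phi.
Variables (n k : nat).
Hypothesis Hk : 1 < k.
Local Notation W := (seq ('I_n * nat)).
Local Notation V := (FP n k).
Local Notation gms := (@gen_mul_seq n k).
Local Notation gm := (@gen_mul n k).

Definition mapp (p : {perm 'I_n}) (s : W) : W := [seq (p q.1, q.2) | q <- s].

Lemma red_mapp p s : reducedb k (mapp p s) = reducedb k s.
Proof.
rewrite /reducedb /mapp all_map -map_comp.
congr (_ && _).
have -> : [seq (fst \o (fun q : 'I_n * nat => (p q.1, q.2))) i | i <- s] = map p (map fst s)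
  by rewrite -map_comp.
elim: (map fst s) => [|a t IH] //=; case: t IH => [|b t] //= IH.
by rewrite (inj_eq (@perm_inj _ p)) IH.
Qed.

Lemma mapp_gms p j s : mapp p (gms j s) = gms (p j) (mapp p s).
Proof.
case/lastP: s => [|r [l e]]; first by [].
rewrite /mapp map_rcons !gms_rcons /= (inj_eq (@perm_inj _ p)).
by case: eqP => _; [case: eqP => _ |]; rewrite ?map_rcons.
Qed.

Lemma mappK p s : mapp p^-1%g (mapp p s) = s.
Proof. by rewrite /mapp -map_comp -[RHS]map_id; apply: eq_map => -[a b] /=; rewrite permK. Qed.

Lemma hdl_mapp p s : hdl (mapp p s) = omap p (hdl s).
Proof. by case: s. Qed.

Lemma hdl_nil (s : W) : hdl s = None -> s = [::].
Proof. by case: s. Qed.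

Lemma hdl_gms j s : hdl (gms j s) = hdl s \/ (hdl (gms j s) = None /\ hdl s = Some j)
   \/ (hdl (gms j s) = Some j /\ hdl s = None).
Proof.
case/lastP: s => [|r [l e]]; first by right; right.
rewrite gms_rcons; case: r => [|a r].
  case: eqVneq => [->|_]; last by left.
  by case: eqP => _; [right; left | left].
by case: eqVneq => _; [case: eqP => _|]; left.
Qed.

Definition mapV p (v : V) : V := insubd v (mapp p (val v)).
Lemma val_mapV p v : val (mapV p v) = mapp p (val v).
Proof. apply: insubdK; rewrite -topredE /= red_mapp; exact: (valP v). Qed.

Definition inC (C : pred 'I_n) (o : option 'I_n) := if o is Some c then C c else false.

Variables (p : {perm 'I_n}) (C : pred 'I_n).

Definition Phi (v : V) : V := if inC C (hdl (val v)) then v else mapV p v.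
Definition sig (v : V) : {perm 'I_n} := if inC C (hdl (val v)) then 1%g else p.
Definition PhiV (x : V * 'I_n) := (Phi x.1, sig x.1 x.2).

Hypothesis HC : forall c, C c -> p c = c.

Lemma sig_gm j w : sig (gm j w) j = sig w j.
Proof.
rewrite /sig (val_gm Hk).
case: (hdl_gms j (val w)) => [->//|[[-> ->]|[-> ->]]] /=.
  by case: (boolP (C j)) => Cj; rewrite ?perm1 // HC.
by case: (boolP (C j)) => Cj; rewrite ?perm1 // HC.
Qed.

Lemma Phi_gm j w : Phi (gm j w) = gm (sig w j) (Phi w).
Proof.
apply: val_inj; rewrite /Phi /sig (val_gm Hk).
case: (hdl_gms j (val w)) => [E|[[E1 E2]|[E1 E2]]].
- rewrite E; case: (inC C (hdl (val w))); first by rewrite perm1.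
  by rewrite !((val_gm Hk), val_mapV) mapp_gms.
- rewrite E1 E2 /=.
  case: (boolP (C j)) => Cj; first by rewrite !((val_gm Hk), val_mapV) perm1 (hdl_nil E1).
  by rewrite !((val_gm Hk), val_mapV) mapp_gms.
- rewrite E1 E2 /=.
  case: (boolP (C j)) => Cj; last by rewrite !((val_gm Hk), val_mapV) mapp_gms.
  by rewrite !((val_gm Hk), val_mapV) (hdl_nil E2) /= HC.
Qed.

Lemma PhiV_arc x y : Marc x y -> Marc (PhiV x) (PhiV y).
Proof.
move=> /Marc_iff [H1 H2]; apply/Marc_iff => /=; split.
  by rewrite H1 Phi_gm.
by rewrite H1 -(sig_gm y.2) => /perm_inj.
Qed.

End Phi.

Section PhiInv.
Variables (n k : nat).
Hypothesis Hk : 1 < k.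
Local Notation V := (FP n k).

Lemma PhiVK (p : {perm 'I_n}) (C : pred 'I_n) : (forall c, C c -> p c = c) ->
  cancel (@PhiV n k p C) (@PhiV n k p^-1%g C).
Proof.
move=> HC [v i]; rewrite /PhiV /Phi /sig /=.
case Hin: (inC C (hdl (sval v))); first by rewrite Hin /= !perm1.
have Hm : sval (mapV p v) = mapp p (sval v) by exact: val_mapV.
have Hin' : inC C (hdl (sval (mapV p v))) = false.
  rewrite Hm hdl_mapp; move: Hin; case: (hdl _) => //= c Cc.
  apply/negP => Cpc; have E' := perm_inj (HC _ Cpc).
  by rewrite -E' Cpc in Cc.
rewrite Hin' permK; congr (_, _).
by apply: val_inj; rewrite !val_mapV mappK.
Qed.

Lemma PhiV_auto (p : {perm 'I_n}) (C : pred 'I_n) : (forall c, C c -> p c = c) ->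
  is_automorphism (@Marc n k) (@PhiV n k p C).
Proof.
move=> HC.
have HC' : forall c, C c -> p^-1%g c = c.
  by move=> c /HC E; rewrite -{1}E permK.
apply: (auto_of (f' := PhiV p^-1%g C)).
- exact: PhiV_arc.
- exact: PhiV_arc.
- exact: PhiVK.
- by have := PhiVK HC'; rewrite invgK.
Qed.

End PhiInv.


Section Main.
Variables (n k : nat).
Hypothesis Hk : 1 < k.
Local Notation W := (seq ('I_n * nat)).
Local Notation V := (FP n k).
Local Notation gms := (@gen_mul_seq n k).
Local Notation gm := (@gen_mul n k).
Local Notation E := (@Marc n k).

Definition lam (g : V) (x : V * 'I_n) := (lmul g x.1, x.2).

Lemma lam_arc g x y : E x y -> E (lam g x) (lam g y).
Proof.
move=> /Marc_iff [H1 H2]; apply/Marc_iff; split => //=.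
by rewrite H1 (lmul_gm Hk).
Qed.

Lemma lam_auto g : is_automorphism E (lam g).
Proof.
have [h Hh] := linv Hk g; have [h' Hh'] := linv Hk h.
have Eg : g = h'.
  by rewrite -(lmul_e Hk g) -Hh' -(lmul_assoc Hk) Hh.
apply: (auto_of (f' := lam h)).
- exact: lam_arc.
- exact: lam_arc.
- by move=> [v i]; rewrite /lam /= (lmul_assoc Hk) Hh (lmul_e Hk).
- by move=> [v i]; rewrite /lam /= (lmul_assoc Hk) Eg Hh' (lmul_e Hk).
Qed.

Lemma PhiV_e0 (p : {perm 'I_n}) (C : pred 'I_n) i : PhiV p C (e0 n k, i) = (e0 n k, p i).
Proof.
rewrite /PhiV /Phi /sig /=; congr (_, _).
by apply: val_inj; rewrite val_mapV.
Qed.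

Lemma vtrans (x y : V * 'I_n) : exists g, is_automorphism E g /\ g x = y.
Proof.
case: x y => [v i] [u j].
have [h Hh] := linv Hk v.
exists (lam u \o PhiV (tperm i j) pred0 \o lam h); split.
  by repeat apply: auto_comp; (apply: lam_auto || apply: PhiV_auto).
have Hl : lam h (v, i) = (e0 n k, i) by rewrite /lam /= Hh.
change (lam u (PhiV (tperm i j) pred0 (lam h (v,i))) = (u,j)).
by rewrite Hl PhiV_e0 tpermL.
Qed.

Lemma val_ginv_e0 j : val (ginv j (e0 n k)) = [:: (j, k.-1)].
Proof.
rewrite /ginv (val_iter_gm Hk) (iter_gms_fresh (w := [::])) //.
by case: (k) Hk => [|[|kk]] // _; rewrite /= ltnS leqnn.
Qed.

Lemma hd_rcons (w : W) x : w != [::] -> hdl (rcons w x) = hdl w.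
Proof. by case: w. Qed.

Lemma ext s (y : nat -> V * 'I_n) z z' : is_sarc E s y -> E (y s) z -> E (y s) z' ->
  exists g, [/\ is_automorphism E g, (forall t, t <= s -> g (y t) = y t) & g z = z'].
Proof.
move=> Hy Hz Hz'.
have [h Hh] := linv Hk (y s).1.
have Ala := lam_auto h.
have [la' [Ala' c1 c2]] := auto_inv Ala.
set c := (y s).2.
set p := z.2; set q := z'.2.
have [_ Hzp] := (proj1 (Marc_iff _ _) Hz).
have [_ Hzq] := (proj1 (Marc_iff _ _) Hz').
have Hpc : p != c by apply/eqP => E'; apply: Hzp.
have Hqc : q != c by apply/eqP => E'; apply: Hzq.
set pi := tperm p q.
have HC : forall d, pred1 c d -> pi d = d by move=> d /eqP ->; rewrite tpermD.
have APhi := PhiV_auto Hk HC.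
exists (la' \o PhiV pi (pred1 c) \o lam h); split.
- apply: auto_comp => //; exact: auto_comp.
- set y' := fun t => lam h (y t).
  have Hy' : is_sarc E s y' by move=> t Ht; apply/(proj2 Ala (y t) (y t.+1)); exact: Hy.
  have Hys : y' s = (e0 n k, c) by rewrite /y' /lam Hh.
  pose P t := hdl (val (y' t).1) = Some c /\ lastl (val (y' t).1) = Some (y' t.+1).2.
  have key : forall d t, t + d.+1 = s -> P t.
    elim=> [|d IH] t Hts.
      have Ht : t < s by rewrite -Hts addn1.
      have := Hy' t Ht; move=> /Marc_iff [H1 H2].
      rewrite /P H1 (val_gm Hk); have -> : t.+1 = s by rewrite -Hts addn1.
      by rewrite Hys.
    have [IH1 IH2] : P t.+1 by apply: IH; rewrite -Hts addSnnS.
    have Ht : t < s by lia.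
    have Ht1 : t.+1 < s by lia.
    have := Hy' t Ht; move=> /Marc_iff [H1 H2].
    have := Hy' t.+1 Ht1; move=> /Marc_iff [_ H3].
    set w := val (y' t.+1).1 in IH1 IH2.
    have wn : w != [::] by move: IH1; case: (w).
    rewrite /P H1 (val_gm Hk) -/w.
    have -> : gms (y' t.+1).2 w = rcons w ((y' t.+1).2, 1).
      apply: (iter_gms_fresh (t := 1)); last by rewrite Hk.
      by rewrite IH2; apply/eqP => -[E']; apply: H3.
    by rewrite hd_rcons // lastl_rcons.
  move=> t Hts; change (la' (PhiV pi (pred1 c) (y' t)) = y t).
  suff -> : PhiV pi (pred1 c) (y' t) = y' t by rewrite c1.
  move: Hts; rewrite leq_eqVlt => /orP [/eqP ->|Hts].
    by rewrite Hys PhiV_e0 HC //= eqxx.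
  have [P1 _] : P t by apply: (key (s - t.+1)); lia.
  rewrite /PhiV /Phi /sig P1 /= eqxx perm1.
  reflexivity.
- have Ew : forall z0, E (y s) z0 -> lmul h z0.1 = ginv z0.2 (e0 n k).
    by move=> z0 /Marc_iff [H1 _]; rewrite -Hh H1 (lmul_gm Hk) (ginv_gm Hk).
  change (la' (PhiV pi (pred1 c) (lam h z)) = z').
  suff -> : PhiV pi (pred1 c) (lam h z) = lam h z' by rewrite c1.
  rewrite /PhiV /lam /= (Ew z) // (Ew z') //.
  have Hv : sval (ginv p (e0 n k)) = [:: (p, k.-1)] := val_ginv_e0 p.
  rewrite -/p -/q /Phi /sig ?Hv ?val_ginv_e0 /= (negbTE Hpc) /pi tpermL; congr (_, _).
  by apply: val_inj; rewrite val_mapV !val_ginv_e0 /mapp /= tpermL.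
Qed.


End Main.


Section Final.
Variables (n k : nat).
Hypothesis Hk : 1 < k.
Local Notation V := (FP n k).
Local Notation gm := (@gen_mul n k).
Local Notation E := (@Marc n k).

Lemma hat : highly_arc_transitive E.
Proof.
elim=> [|s IH] x y Hx Hy.
  have [g [Ag Hg]] := vtrans Hk (x 0) (y 0).
  by exists g; split => // t; rewrite leqn0 => /eqP ->.
have Hxs : is_sarc E s x by move=> t Ht; apply: Hx; apply: ltnW.
have Hys : is_sarc E s y by move=> t Ht; apply: Hy; apply: ltnW.
have [g [Ag Hg]] := IH x y Hxs Hys.
have Harc : E (y s) (g (x s.+1)).
  rewrite -Hg //; apply/(proj2 Ag (x s) (x s.+1)); exact: Hx.
have [h [Ah Hh1 Hh2]] := ext Hk Hys Harc (Hy s (ltnSn s)).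
exists (h \o g); split; first exact: auto_comp.
move=> t; rewrite leq_eqVlt => /orP [/eqP ->|Ht] /=; first by [].
by rewrite Hg // Hh1.
Qed.

Lemma outdeg (x : V * 'I_n) : out_degree_is E x (n - 1).
Proof.
exists [seq (ginv j x.1, j) | j <- [seq j <- enum 'I_n | j != x.2]].
split; [|split].
- rewrite map_inj_uniq; first by apply: filter_uniq; exact: enum_uniq.
  by move=> a b [_ ->].
- rewrite size_map size_filter.
  have Hc := count_predC (pred1 x.2) (enum 'I_n).
  rewrite size_enum_ord (count_uniq_mem _ (enum_uniq _)) mem_enum add1n in Hc.
  change (count (predC (pred1 x.2)) (enum 'I_n) = n - 1).
  by rewrite -[in RHS]Hc subn1.
- move=> y; rewrite Marc_iff; split.
    move=> [H1 H2]; apply/mapP; exists y.2.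
      by rewrite mem_filter mem_enum andbT; apply/eqP => E'; apply: H2.
    by rewrite H1 (ginv_gm Hk); case: y {H1 H2}.
  move=> /mapP [j]; rewrite mem_filter => /andP [Hj _] ->; split => /=.
    by rewrite (gm_ginv Hk).
  by apply/eqP; rewrite eq_sym.
Qed.

Lemma indeg (x : V * 'I_n) : in_degree_is E x (n - 1).
Proof.
exists [seq (gm x.2 x.1, j) | j <- [seq j <- enum 'I_n | j != x.2]].
split; [|split].
- rewrite map_inj_uniq; first by apply: filter_uniq; exact: enum_uniq.
  by move=> a b [->].
- rewrite size_map size_filter.
  have Hc := count_predC (pred1 x.2) (enum 'I_n).
  rewrite size_enum_ord (count_uniq_mem _ (enum_uniq _)) mem_enum add1n in Hc.
  change (count (predC (pred1 x.2)) (enum 'I_n) = n - 1).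
  by rewrite -[in RHS]Hc subn1.
- move=> y; rewrite Marc_iff; split.
    move=> [H1 H2]; apply/mapP; exists y.2.
      by rewrite mem_filter mem_enum andbT; apply/eqP.
    by rewrite -H1; case: y {H1 H2}.
  by move=> /mapP [j]; rewrite mem_filter => /andP [Hj _] -> /=; split => //; apply/eqP.
Qed.

Lemma noZ : 2 < n -> ~ property_Z E.
Proof.
move=> Hn [phi [Hphi _]].
have H0 : 0 < n by lia.
have H1 : 1 < n by lia.
pose i0 := Ordinal H0; pose i1 := Ordinal H1; pose i2 := Ordinal Hn.
have step : forall v, phi (v, i0) = (phi (gm i0 v, i0) + 1)%R.
  move=> v.
  have A1 : E (gm i0 v, i1) (v, i0) by apply/Marc_iff.
  set w := ginv i2 (gm i0 v).
  have A2 : E (gm i0 v, i1) (w, i2) by apply/Marc_iff; rewrite /= (gm_ginv Hk).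
  have A3 : E (gm i0 v, i0) (w, i2) by apply/Marc_iff; rewrite /= (gm_ginv Hk).
  rewrite (Hphi _ _ A1).
  have := Hphi _ _ A2; rewrite (Hphi _ _ A3) => /GRing.addIr ->.
  by [].
have iter_step : forall t v, phi (v, i0) = (phi (iter t (gm i0) v, i0) + t%:Z)%R.
  elim=> [|t IH] v; first by rewrite GRing.addr0.
  rewrite IH iterS step.
  lia.
have := iter_step k (e0 n k); rewrite (iter_gm_k Hk).
lia.
Qed.

End Final.

Theorem corollary5p4 (n k : nat) : 3 <= n -> 2 <= k ->
  highly_arc_transitive (@Marc n k) /\
  (forall x : FP n k * 'I_n,
     in_degree_is (@Marc n k) x (n - 1) /\ out_degree_is (@Marc n k) x (n - 1)) /\
  ~ property_Z (@Marc n k).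
Proof.
move=> Hn Hk; split; first exact: hat.
split; last exact: noZ.
by move=> x; split; [exact: indeg | exact: outdeg].
Qed.
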